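(* Let $n\ge1$, $\tau\in\mathfrak{S}_n$ and $1\le a<b\le n$. Then $\lambda(\tau)=\lambda\big(\overline{\tau}^{[a,b]}\big)$.
   Context: Permutations in one-line notation; $\mathrm{st}(a_1,\dots,a_p)$ is the permutation with the same relative order as distinct integers $a_i$. Trees: $\mathcal{Y}_n$ = rooted planar binary trees with $n$ internal nodes, $\mathcal{Y}_0=\{|\}$; $s\vee t$ = tree whose root has left subtree $s$ and right subtree $t$; $t=t_l\vee t_r$ uniquely. For $\sigma\in\mathfrak{S}_p,\tau\in\mathfrak{S}_q$, $\sigma\vee\tau=(\sigma(1)+q,\dots,\sigma(p)+q,p+q+1,\tau(1),\dots,\tau(q))$. $\lambda:\mathfrak{S}_n\to\mathcal{Y}_n$: $\lambda(\mathrm{id}_0)=|$, and for $j=\sigma^{-1}(n)$, $\lambda(\sigma)=\lambda(\mathrm{st}(\sigma(1),..,\sigma(j-1)))\vee\lambda(\mathrm{st}(\sigma(j+1),..,\sigma(n)))$. $\gamma:\mathcal{Y}_n\to\mathfrak{S}_n$: $\gamma(|)=\mathrm{id}_0$, $\gamma(t)=\gamma(t_l)\vee\gamma(t_r)$. For any permutation $\sigma$, $\overline{\sigma}:=\gamma(\lambda(\sigma))$. Given $\tau\in\mathfrak{S}_n$ and $1\le a<b\le n$, let $\mathsf{S}=\{s_1<\dots<s_m\}=\tau^{-1}([a,b])$, let $\sigma=\mathrm{st}(\tau(s_1),\dots,\tau(s_m))$, and define $\overline{\tau}^{[a,b]}\in\mathfrak{S}_n$ by $\overline{\tau}^{[a,b]}(i)=\tau(i)$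 if $i\notin\mathsf{S}$ and $\overline{\tau}^{[a,b]}(s_j)=a-1+\overline{\sigma}(j)$. *)

(* Defs.v *)
(* Permutations in one-line notation are sequences of nats. *)
From mathcomp Require Import all_boot.
Set Implicit Arguments. Unset Strict Implicit. Unset Printing Implicit Defensive.

Definition is_perm (n : nat) (s : seq nat) : bool := perm_eq s (iota 1 n).

Definition st (s : seq nat) : seq nat := [seq count (fun y => y <= x) s | x <- s].

Inductive bintree : Type := Leaf | Node of bintree & bintree.

Definition pvee (sg tau : seq nat) : seq nat :=
  let p := size sg in let q := size tau in
  [seq x + q | x <- sg] ++ (p + q).+1 :: tau.

Fixpoint lambda_aux (fuel : nat) (s : seq nat) : bintree :=
  match fuel with
  | 0 => Leaf
  | f.+1 =>
    if s is [::] then Leaf else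
    let j := index (size s) s in   (* 0-based position of n, i.e. sigma^{-1}(n) - 1 *)
    Node (lambda_aux f (st (take j s))) (lambda_aux f (st (drop j.+1 s)))
  end.

Definition lambda (s : seq nat) : bintree := lambda_aux (size s) s.

Fixpoint gamma (t : bintree) : seq nat :=
  match t with
  | Leaf => [::]
  | Node l r => pvee (gamma l) (gamma r)
  end.

Definition pbar (s : seq nat) : seq nat := gamma (lambda s).

Definition inab (a b : nat) (x : nat) : bool := (a <= x) && (x <= b).

Definition taubar (tau : seq nat) (a b : nat) : seq nat :=
  let sb := pbar (st (filter (inab a b) tau)) in
  mkseq (fun i => let x := nth 0 tau i in
                  if inab a b x then a - 1 + nth 0 sb (count (inab a b) (take i tau))
                  else x) (size tau).

(* Main.v *)
Require Import Defs.
From mathcomp Require Import all_boot zify.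

Fixpoint mx (s : seq nat) := if s is x :: s' then maxn x (mx s') else 0.
Fixpoint Taux f s := match f with 0 => Leaf | f.+1 =>
  if s is [::] then Leaf else let j := index (mx s) s in
  Node (Taux f (take j s)) (Taux f (drop j.+1 s)) end.
Definition T s := Taux (size s) s.
Fixpoint nodes t := match t with Leaf => 0 | Node l r => (nodes l + nodes r).+1 end.

Lemma mx_ge s x : x \in s -> x <= mx s.
Proof.
elim: s => //= y s IH; rewrite inE => /orP[/eqP->|/IH]; lia.
Qed.

Lemma mx_mem s : s != [::] -> mx s \in s.
Proof.
elim: s => //= y s IH _; rewrite inE.
case: s IH => [|z s] IH /=; first by rewrite maxn0 eqxx.
have := IH isT; rewrite /maxn; case: ifP => _ H; first by rewrite H orbT.
by rewrite eqxx.
Qed.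

Lemma split_index (s : seq nat) x : x \in s ->
  s = take (index x s) s ++ x :: drop (index x s).+1 s /\ x \notin take (index x s) s.
Proof.
elim: s => //= y s IH; rewrite inE; case: eqP => [->|ne] /= H.
  by rewrite /= eqxx /= drop0.
have [E N] := IH H.
have -> : (y == x) = false by apply/eqP => E'; apply: ne.
rewrite /=; split; first by rewrite -E.
by rewrite inE negb_or N andbT; apply/eqP => E'; apply: ne.
Qed.

Lemma Taux_fuel f g s : size s <= f -> size s <= g -> Taux f s = Taux g s.
Proof.
elim: f g s => [|f IH] [|g] [|y s] //=.
set s' := y :: s => Hf Hg.
have Hm : mx s' \in s' by apply: mx_mem.
have Hi : index (mx s') s' < size s' by rewrite index_mem.
congr Node; apply: IH; rewrite ?size_take ?size_drop; try case: ifP; rewrite /= in Hf Hg Hi *; lia.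
Qed.

Lemma mx_le s m : (forall y, y \in s -> y <= m) -> mx s <= m.
Proof.
elim: s => //= y s IH H; rewrite geq_max H ?inE ?eqxx // IH // => z Hz.
by rewrite H // inE Hz orbT.
Qed.

Lemma Taux_S f s : s != [::] -> Taux f.+1 s =
  Node (Taux f (take (index (mx s) s) s)) (Taux f (drop (index (mx s) s).+1 s)).
Proof. by case: s. Qed.

Lemma T_split s1 x s2 : x \notin s1 -> (forall y, y \in s1 ++ x :: s2 -> y <= x) ->
  T (s1 ++ x :: s2) = Node (T s1) (T s2).
Proof.
move=> N H; rewrite /T.
have Hx : x \in s1 ++ x :: s2 by rewrite mem_cat inE eqxx orbT.
have Em : mx (s1 ++ x :: s2) = x.
  by apply/eqP; rewrite eqn_leq mx_ge // andbT; apply/mx_le.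
have Ei : index x (s1 ++ x :: s2) = size s1.
  by rewrite index_cat (negbTE N) /= eqxx addn0.
rewrite size_cat /= addnS Taux_S; last by case: (s1).
rewrite Em Ei take_size_cat // drop_cat ltnNge leqnSn /= subSnn /= drop0.
by congr Node; apply: Taux_fuel; lia.
Qed.

Lemma T_inv s : s != [::] -> exists (s1 : seq nat) (x : nat) (s2 : seq nat), [/\ s = s1 ++ x :: s2, x \notin s1 &
   forall y, y \in s -> y <= x].
Proof.
move=> ne; have Hm := @mx_mem s ne; have [E N] := @split_index s _ Hm.
exists (take (index (mx s) s) s), (mx s), (drop (index (mx s) s).+1 s); split => //.
by move=> y; apply: mx_ge.
Qed.

Lemma T_nil : T [::] = Leaf. Proof. by []. Qed.

Lemma T_ind (P : seq nat -> Prop) : P [::] ->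
  (forall s1 x s2, x \notin s1 -> (forall y, y \in s1 ++ x :: s2 -> y <= x) ->
     P s1 -> P s2 -> P (s1 ++ x :: s2)) -> forall s, P s.
Proof.
move=> P0 PS s; elim: {s}(size s) {-2}s (leqnn (size s)) => [|n IH] s.
  by case: s.
case: s => [|y s] Hs //; have [s1 [x [s2 [E N H]]]] := @T_inv (y :: s) isT.
rewrite E in Hs H *; apply: PS => //; apply: IH; rewrite size_cat /= in Hs; lia.
Qed.

Lemma size_T s : nodes (T s) = size s.
Proof.
elim/T_ind: s => // s1 x s2 N H IH1 IH2; rewrite T_split //= IH1 IH2 size_cat /=; lia.
Qed.

Lemma T_mono s g : {in s &, forall x y, (g x <= g y) = (x <= y)} -> T (map g s) = T s.
Proof.
elim/T_ind: s g => // s1 x s2 N H IH1 IH2 g Hg.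
have Hx : x \in s1 ++ x :: s2 by rewrite mem_cat inE eqxx orbT.
rewrite map_cat /= T_split ?T_split //.
- congr Node; [apply: IH1 | apply: IH2] => u v Hu Hv; apply: Hg;
   by rewrite mem_cat ?inE ?Hu ?Hv ?orbT.
- apply/mapP => -[w Hw E].
  have Hw' : w \in s1 ++ x :: s2 by rewrite mem_cat Hw.
  have : w <= x by apply: H.
  have : x <= w by rewrite -Hg // E.
  move=> h1 h2; have Ew : w = x by apply/eqP; rewrite eqn_leq h1 h2.
  by rewrite -Ew Hw in N.
- move=> y; rewrite -map_cons -map_cat => /mapP [w Hw ->].
  by rewrite Hg // H.
Qed.

Lemma count_lt (s : seq nat) x y : x < y -> y \in s ->
  count (fun z => z <= x) s < count (fun z => z <= y) s.
Proof.
move=> lt; elim: s => //= c s IH; rewrite inE => /orP[/eqP <-|Hy].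
  have -> : (y <= x) = false by lia.
  rewrite leqnn /= add0n add1n ltnS; apply: sub_count => z /=; lia.
have := IH Hy; case h1: (c <= x); case h2: (c <= y); move: h1 h2 => /=; lia.
Qed.

Lemma st_mono s : {in s &, forall x y,
  (count (fun z => z <= x) s <= count (fun z => z <= y) s) = (x <= y)}.
Proof.
move=> x y Hx Hy; case: (leqP x y) => H.
  by apply: sub_count => z /=; lia.
by apply/negbTE; rewrite -ltnNge; apply: count_lt.
Qed.

Lemma T_st s : T (st s) = T s.
Proof. exact: T_mono (@st_mono s). Qed.

Lemma good_perm s : uniq s -> (forall x, x \in s -> 0 < x <= size s) -> is_perm (size s) s.
Proof.
move=> U H; rewrite /is_perm; apply: uniq_perm => //; first exact: iota_uniq.
have sub : {subset s <= iota 1 (size s)}.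
  by move=> x /H; rewrite mem_iota; lia.
have [] := uniq_min_size U sub; by rewrite ?size_iota.
Qed.

Lemma perm_facts n s : is_perm n s ->
  [/\ size s = n, uniq s & forall x, (x \in s) = (0 < x <= n)].
Proof.
move=> P; split.
- by rewrite (perm_size P) size_iota.
- by rewrite (perm_uniq P) iota_uniq.
- by move=> x; rewrite (perm_mem P) mem_iota add1n ltnS.
Qed.

Lemma st_perm s : uniq s -> is_perm (size (st s)) (st s).
Proof.
move=> U; apply: good_perm.
  rewrite map_inj_in_uniq // => x y Hx Hy E; apply/eqP; rewrite eqn_leq.
  by rewrite -(@st_mono s x y Hx Hy) -(@st_mono s y x Hy Hx) E leqnn.
move=> x /mapP [y Hy ->]; rewrite size_map -has_count count_size andbT.
by apply/hasP; exists y.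
Qed.

Lemma lam_S f s : s != [::] -> lambda_aux f.+1 s =
  Node (lambda_aux f (st (take (index (size s) s) s)))
       (lambda_aux f (st (drop (index (size s) s).+1 s))).
Proof. by case: s. Qed.

Lemma lam_T f s : size s <= f -> is_perm (size s) s -> lambda_aux f s = T s.
Proof.
elim: f s => [|f IH] s Hf P; first by case: s Hf P.
case: s Hf P => [|y s0] // Hf P; have ne : y :: s0 != [::] by [].
move: (y :: s0) ne Hf P => s ne Hf P.
have [_ U M] := perm_facts _ _ P.
have Hn : size s \in s by rewrite M leqnn andbT lt0n size_eq0.
have [E N] := @split_index s _ Hn.
rewrite lam_S // [in RHS]E T_split //; last first.
  by move=> z; rewrite -E M => /andP[].
have Hi : index (size s) s < size s by rewrite index_mem.
have U1 : uniq (take (index (size s) s) s) by apply: take_uniq.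
have U2 : uniq (drop (index (size s) s).+1 s) by apply: drop_uniq.
rewrite IH ?T_st; last exact: st_perm.
  rewrite IH ?T_st //; last exact: st_perm.
  by rewrite size_map size_drop; move: Hf; clear; lia.
rewrite size_map size_takel; last exact: ltnW.
by rewrite -ltnS; exact: leq_trans Hi Hf.
Qed.

Lemma gamma_props t : [/\ size (gamma t) = nodes t, uniq (gamma t),
  forall x, x \in gamma t -> 0 < x <= size (gamma t) & T (gamma t) = t].
Proof.
elim: t => [|l [Sl Ul Rl Tl] r [Sr Ur Rr Tr]] //=.
rewrite /pvee; set p := size (gamma l); set q := size (gamma r).
have Rm : forall z, z \in [seq x + q | x <- gamma l] -> q < z <= p + q.
  by move=> z /mapP [x /Rl Hx ->]; move: Hx; clear; lia.
have Ncat : (p + q).+1 \notin [seq x + q | x <- gamma l].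
  by apply/negP => /Rm; clear; lia.
split.
- by rewrite size_cat size_map /= -Sl -Sr; lia.
- rewrite cat_uniq map_inj_uniq ?Ul; last exact: addIn.
  apply/and3P; split => //; last first.
    by rewrite /= Ur andbT; apply/negP => /Rr; clear; lia.
    apply/hasPn => z; rewrite inE => /orP[/eqP ->|/Rr Hz]; apply/negP => /Rm.
      by clear; lia.
    by move: Hz; clear; lia.
- move=> z; rewrite size_cat size_map /= mem_cat inE => /orP[/Rm|/orP[/eqP ->|/Rr]];
    clear; lia.
- rewrite T_split // ?Tr; last first.
    move=> z; rewrite mem_cat inE => /orP[/Rm|/orP[/eqP ->|/Rr]]; clear; lia.
  by rewrite T_mono ?Tl // => x y _ _; rewrite leq_add2r.
Qed.

Section Rep.
Variables a b : nat.
Local Notation I := (inab a b).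

Fixpoint replace (s u : seq nat) := match s with [::] => [::]
  | c :: s' => if I c then head c u :: replace s' (behead u) else c :: replace s' u end.

Lemma replace_nil s : replace s [::] = s.
Proof. by elim: s => //= c s ->; case: ifP. Qed.

Lemma size_replace s u : size (replace s u) = size s.
Proof. by elim: s u => //= c s IH u; case: ifP => _ /=; rewrite IH. Qed.

Lemma replace_cat s1 s2 u : replace (s1 ++ s2) u =
  replace s1 (take (count I s1) u) ++ replace s2 (drop (count I s1) u).
Proof.
elim: s1 u => [|c s1 IH] u /=; first by rewrite drop0.
case: ifP => Hc /=; last by rewrite IH.
case: u => [|h u] /=; first by rewrite IH /= !replace_nil.
by rewrite IH.
Qed.

Lemma perm_replace s u : size u = count I s ->
  perm_eq (replace s u) (filter (predC I) s ++ u).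
Proof.
elim: s u => [|c s IH] u /=; first by case: u.
case: ifP => Hc /=.
  case: u => [|h u] //= [Hu].
  rewrite perm_sym -cat1s perm_catCA /= perm_cons perm_sym; exact: IH.
by rewrite perm_cons; apply: IH.
Qed.

Lemma mem_replace s u z : size u = count I s -> z \in replace s u ->
  (z \in s /\ ~~ I z) \/ z \in u.
Proof.
move=> Hu; rewrite (perm_mem (perm_replace _ _ Hu)) mem_cat mem_filter.
by case/orP => [/andP [H1 H2]|H]; [left|right].
Qed.

Lemma nth_replace s u i : size u = count I s -> i < size s ->
  nth 0 (replace s u) i = if I (nth 0 s i) then nth 0 u (count I (take i s)) else nth 0 s i.
Proof.
elim: s u i => [|c s IH] u [|i] //= Hu Hi.
  by case: ifP => Hc //=; case: u Hu => //=; rewrite Hc.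
case: ifP => Hc /=.
  by case: u Hu => [|h u]; rewrite /= Hc //= => -[Hu]; rewrite IH.
by move: Hu; rewrite Hc !add0n => Hu; rewrite IH.
Qed.

End Rep.

Lemma cat_eq_split (x y s1 s2 : seq nat) m : x ++ y = s1 ++ m :: s2 ->
  (exists x2, x = s1 ++ m :: x2 /\ s2 = x2 ++ y) \/
  (exists y1, s1 = x ++ y1 /\ y = y1 ++ m :: s2).
Proof.
elim: x s1 => [|c x IH] s1 /=; first by move=> ->; right; exists s1.
case: s1 => [|d s1] /= [-> E].
  by left; exists x; rewrite E.
case: (IH _ E) => [[x2 [-> ->]]|[y1 [-> ->]]]; [left; exists x2|right; exists y1]; by [].
Qed.

Lemma T_eq_nil s : T s = Leaf -> s = [::].
Proof. by move=> H; apply/eqP; rewrite -size_eq0 -size_T H. Qed.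

Lemma catnil (x y : seq nat) : x ++ y = [::] -> x = [::] /\ y = [::].
Proof. by case: x; case: y. Qed.

Lemma T_cat x y x' y' : size x = size x' -> T (x ++ y) = T (x' ++ y') ->
  T x = T x' /\ T y = T y'.
Proof.
elim: {x y}(size (x ++ y)) {-2}x {-2}y (leqnn (size (x ++ y))) x' y' => [|n IH] x y Hn x' y' Hs E.
  move: Hn; rewrite leqn0 size_eq0 => /eqP Hxy.
  have := E; rewrite Hxy => /esym /T_eq_nil Hxy'.
  by case: (catnil _ _ Hxy) => -> ->; case: (catnil _ _ Hxy') => -> ->.
case Exy: (x ++ y) => [|c0 r0].
  have := E; rewrite Exy => /esym /T_eq_nil Hxy'.
  by case: (catnil _ _ Exy) => -> ->; case: (catnil _ _ Hxy') => -> ->.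
have ne : x ++ y != [::] by rewrite Exy.
clear Exy.
have ne' : x' ++ y' != [::].
  by rewrite -size_eq0 -size_T -E size_T size_eq0.
have [s1 [m [s2 [E1 N1 M1]]]] := T_inv _ ne.
have [s1' [m' [s2' [E1' N1' M1']]]] := T_inv _ ne'.
have T1 : T (x ++ y) = Node (T s1) (T s2).
  by rewrite E1 T_split // => z Hz; apply: M1; rewrite E1.
have T1' : T (x' ++ y') = Node (T s1') (T s2') by rewrite E1' T_split // => z Hz; apply: M1'; rewrite E1'.
move: (E); rewrite T1 T1' => -[Ts1 Ts2].
have Ss1 : size s1 = size s1' by rewrite -!size_T Ts1.
have Hsz : size (x ++ y) = (size s1 + size s2).+1 by rewrite E1 size_cat /= addnS.
case: (cat_eq_split _ _ _ _ _ E1) => [[x2 [Ex Es2]]|[y1 [Es1 Ey]]];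
case: (cat_eq_split _ _ _ _ _ E1') => [[x2' [Ex' Es2']]|[y1' [Es1' Ey']]].
- have [Tx2 Ty] : T x2 = T x2' /\ T y = T y'.
    apply: IH; last by rewrite -Es2 -Es2'.
      by rewrite -Es2; move: Hn Hsz; clear; lia.
    by move: Hs; rewrite Ex Ex' !size_cat /= Ss1; clear; lia.
  split => //; rewrite Ex Ex' !T_split ?Tx2 ?Ts1 //.
  + by move=> z Hz; apply: M1'; rewrite Ex' mem_cat Hz.
  + by move=> z Hz; apply: M1; rewrite Ex mem_cat Hz.
- by move: Hs Ss1; rewrite Ex Es1' !size_cat /=; clear; lia.
- by move: Hs Ss1; rewrite Ex' Es1 !size_cat /=; clear; lia.
- have [Tx Ty1] : T x = T x' /\ T y1 = T y1'.
    apply: IH; last by rewrite -Es1 -Es1'.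
      by rewrite -Es1; move: Hn Hsz; clear; lia.
    by [].
  split => //; rewrite Ey Ey' !T_split ?Ty1 ?Ts2 //.
  + by apply: contra N1'; rewrite Es1' mem_cat => ->; rewrite orbT.
  + by move=> z Hz; apply: M1'; rewrite E1' Es1' -catA mem_cat Hz orbT.
  + by apply: contra N1; rewrite Es1 mem_cat => ->; rewrite orbT.
  + by move=> z Hz; apply: M1; rewrite E1 Es1 -catA mem_cat Hz orbT.
Qed.

Lemma G a b s : forall u, size u = count (inab a b) s -> all (inab a b) u ->
  T u = T (filter (inab a b) s) -> T (replace a b s u) = T s.
Proof.
elim/T_ind: s => [|s1 x s2 N M IH1 IH2] u Hu Au Tu.
  by case: u Hu {Au Tu}.
have Ms1 : forall z, z \in s1 -> z <= x by move=> z Hz; apply: M; rewrite mem_cat Hz.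
have Ms2 : forall z, z \in s2 -> z <= x.
  by move=> z Hz; apply: M; rewrite mem_cat inE Hz !orbT.
have Ts : T (s1 ++ x :: s2) = Node (T s1) (T s2) by rewrite T_split.
have Hcnt : count (inab a b) (s1 ++ x :: s2) = count (inab a b) s1 + inab a b x + count (inab a b) s2.
  by rewrite count_cat /= addnA.
rewrite Ts.
case Hx : (inab a b x).
-
  have Ef : filter (inab a b) (s1 ++ x :: s2) = filter (inab a b) s1 ++ x :: filter (inab a b) s2.
    by rewrite filter_cat /= Hx.
  have Tf : T (filter (inab a b) (s1 ++ x :: s2)) =
      Node (T (filter (inab a b) s1)) (T (filter (inab a b) s2)).
    rewrite Ef T_split //; first by rewrite mem_filter Hx.
    by move=> z; rewrite -Ef mem_filter => /andP[_ /M].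
  have ne : u != [::] by apply/eqP => E; rewrite E Tf in Tu.
  have [u1 [y [u2 [Eu N' M']]]] := T_inv _ ne.
  have Tu' : T u = Node (T u1) (T u2) by rewrite Eu T_split // -Eu.
  move: Tu; rewrite Tu' Tf => -[Tu1 Tu2].
  have Su1 : size u1 = count (inab a b) s1 by rewrite -size_T Tu1 size_T size_filter.
  have Su2 : size u2 = count (inab a b) s2 by rewrite -size_T Tu2 size_T size_filter.
  have Hy : inab a b y by apply: (allP Au); rewrite Eu mem_cat inE eqxx orbT.
  have Au1 : all (inab a b) u1 by apply/allP => z Hz; apply: (allP Au); rewrite Eu mem_cat Hz.
  have Au2 : all (inab a b) u2.
    by apply/allP => z Hz; apply: (allP Au); rewrite Eu mem_cat inE Hz !orbT.
  have Er : replace a b (s1 ++ x :: s2) u = replace a b s1 u1 ++ y :: replace a b s2 u2.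
    by rewrite replace_cat Eu -Su1 take_size_cat // drop_size_cat //= Hx.
  have Mr : forall z, z \in replace a b s1 u1 ++ y :: replace a b s2 u2 -> z <= y.
    move=> z; rewrite mem_cat inE => /orP[|/orP[/eqP ->//|]].
      case/(mem_replace _ _ _ _ _ Su1) => [[/Ms1 Hz1 Hz2]|Hz]; last first.
        by apply: M'; rewrite Eu mem_cat Hz.
      by move: Hz1 Hz2 Hx Hy; rewrite /inab; clear; lia.
    case/(mem_replace _ _ _ _ _ Su2) => [[/Ms2 Hz1 Hz2]|Hz]; last first.
      by apply: M'; rewrite Eu mem_cat inE Hz !orbT.
    by move: Hz1 Hz2 Hx Hy; rewrite /inab; clear; lia.
  rewrite Er T_split //; first by rewrite IH1 ?IH2.
  apply/negP => /(mem_replace _ _ _ _ _ Su1) [[_ H]|H].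
    by rewrite Hy in H.
  by rewrite H in N'.
-
  have [Hlt|Hgt] : x < a \/ b < x by move: Hx; rewrite /inab; clear; lia.
  + have Hc : count (inab a b) (s1 ++ x :: s2) = 0.
      apply/eqP; rewrite -leqn0 leqNgt -has_count; apply/hasPn => z Hz.
      have := M z Hz; move: Hlt; rewrite /inab; clear; lia.
    by move: Hu; rewrite Hc => /size0nil ->; rewrite replace_nil Ts.
  + have Ef : filter (inab a b) (s1 ++ x :: s2) = filter (inab a b) s1 ++ filter (inab a b) s2.
      by rewrite filter_cat /= Hx.
    set u1 := take (count (inab a b) s1) u.
    set u2 := drop (count (inab a b) s1) u.
    have Su1 : size u1 = count (inab a b) s1 by rewrite size_takel // Hu Hcnt; clear; lia.
    have Su2 : size u2 = count (inab a b) s2 by rewrite size_drop Hu Hcnt Hx; clear; lia.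
    have [Tu1 Tu2] : T u1 = T (filter (inab a b) s1) /\ T u2 = T (filter (inab a b) s2).
      by apply: T_cat; rewrite ?size_filter // cat_take_drop -Ef.
    have Au1 : all (inab a b) u1 by apply/allP => z /mem_take Hz; apply: (allP Au).
    have Au2 : all (inab a b) u2 by apply/allP => z /mem_drop Hz; apply: (allP Au).
    have Er : replace a b (s1 ++ x :: s2) u = replace a b s1 u1 ++ x :: replace a b s2 u2.
      by rewrite replace_cat /= Hx.
    rewrite Er T_split; first by rewrite IH1 ?IH2.
    * apply/negP => /(mem_replace _ _ _ _ _ Su1) [[H _]|H].
        by rewrite H in N.
      by have := allP Au1 _ H; move: Hgt; rewrite /inab; clear; lia.
    * move=> z; rewrite mem_cat inE => /orP[|/orP[/eqP ->//|]].
        case/(mem_replace _ _ _ _ _ Su1) => [[/Ms1 //]|Hz].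
        by have := allP Au1 _ Hz; move: Hgt; rewrite /inab; clear; lia.
      case/(mem_replace _ _ _ _ _ Su2) => [[/Ms2 //]|Hz].
      by have := allP Au2 _ Hz; move: Hgt; rewrite /inab; clear; lia.
Qed.

Theorem lemma6p2 (n : nat) (tau : seq nat) (a b : nat) :
  1 <= n -> is_perm n tau -> 1 <= a -> a < b -> b <= n ->
  lambda tau = lambda (taubar tau a b).
Proof.
move=> H1 P Ha Hab Hb.
have [Stau Utau Mtau] := perm_facts _ _ P.
set I := inab a b.
set f := filter I tau.
set p := st f.
have Uf : uniq f by apply: filter_uniq.
have Pp : is_perm (size p) p by apply: st_perm.
have Lp : lambda p = T p by apply: lam_T.
have [Sg Ug Rg Tg] := gamma_props (T p).
set sb := pbar p.
have Esb : sb = gamma (T p) by rewrite /sb /pbar Lp.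
set u := map (addn (a - 1)) sb.
have Sp : size p = count I tau by rewrite size_map size_filter.
have Ssb : size sb = count I tau by rewrite Esb Sg size_T.
have Hcnt : count I tau <= b - a + 1.
  rewrite -size_filter -/f -(size_iota a (b - a + 1)); apply: uniq_leq_size => // z.
  by rewrite mem_filter mem_iota /I /inab => /andP[/andP[h1 h2] _]; move: h1 h2 Hab; clear; lia.
have Hu : size u = count I tau by rewrite size_map.
have Au : all I u.
  apply/allP => z /mapP [y]; rewrite Esb => /Rg; rewrite -Esb Ssb => Hy ->.
  by rewrite /I /inab; move: Hy Hcnt Ha Hab; clear; lia.
have Tu : T u = T f.
  rewrite T_mono; last by move=> x y _ _; rewrite leq_add2l.
  by rewrite Esb Tg T_st.
have Uu : uniq u.
  by rewrite map_inj_uniq ?Esb //; apply: addnI.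
have Eq : taubar tau a b = replace a b tau u.
  apply: (@eq_from_nth _ 0); first by rewrite size_mkseq size_replace.
  move=> i; rewrite size_mkseq => Hi; rewrite nth_mkseq // nth_replace //.
  cbv beta zeta.
  case Hin : (I (nth 0 tau i)); rewrite /I in Hin; rewrite Hin //.
  rewrite (nth_map 0) // -/f -/p -/sb Ssb.
  rewrite -[in X in _ < X](cat_take_drop i tau) count_cat (drop_nth 0 Hi) /=.
  rewrite /I Hin; clear; lia.
have Ur : uniq (replace a b tau u).
  rewrite (perm_uniq (perm_replace _ _ _ _ Hu)) cat_uniq filter_uniq // Uu andbT.
  apply/hasPn => z /(allP Au); rewrite /I => Hz.
  by rewrite mem_filter /= Hz.
have Pr : is_perm (size (replace a b tau u)) (replace a b tau u).
  apply: good_perm => // z /(mem_replace _ _ _ _ _ Hu) [[Hz _]|Hz].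
    by rewrite size_replace Stau -Mtau.
  have := allP Au _ Hz; rewrite size_replace Stau /I /inab.
  by move: Ha Hb; clear; lia.
rewrite Eq /lambda lam_T //; last by rewrite Stau.
rewrite lam_T // G //.
Qed.
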